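(* Let $n\ge1$. Then $\gamma_e(P_n)=\lceil (n+1)/2\rceil$ (i.e., $P_n$ admits an extended irregular dominating set with exactly $\lceil (n+1)/2\rceil$ vertices) if and only if $n\in\{1,6,10\}$.
   Context: $P_n$ is the path on $n$ vertices $[x_1,\dots,x_n]$ with edges $\{x_i,x_{i+1}\}$. In a finite simple graph $\Gamma=(V,E)$ with distance $d$, a vertex $v$ carrying a non-negative integer label $\ell$ dominates (covers) exactly the vertices $u$ with $d(u,v)=\ell$; a vertex labeled $0$ dominates only itself. An extended irregular dominating set is a set $S\subseteq V$ with a labeling $\lambda:S\to\mathbb{Z}_{\ge0}$ with distinct labels on distinct vertices, such that every vertex of $V$ is dominated by some vertex of $S$; some vertex of $S$ has label $0$ (for a single vertex, the vertex labeled $0$ suffices). $\gamma_e(\Gamma)$ denotes the minimum cardinality of an extended irregular dominating set of $\Gamma$; every extended irregular dominating set of $P_n$ has at least $\lceil (n+1)/2\rceil$ vertices. *)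

(* Defs.v *)
From mathcomp Require Import all_boot.
Set Implicit Arguments. Unset Strict Implicit. Unset Printing Implicit Defensive.

(* The path P_n on vertices 'I_n (vertex x_{i+1} is the ordinal i), edges {i, i+1}.
   Its graph distance is d(i, j) = |i - j|. *)
Definition path_dist (n : nat) (u v : 'I_n) : nat := maxn (u - v) (v - u).

Definition dominates (n : nat) (lab : 'I_n -> nat) (v u : 'I_n) : bool :=
  path_dist u v == lab v.

Definition ext_irr_dom (n : nat) (S : {set 'I_n}) (lab : 'I_n -> nat) : Prop :=
  {in S &, injective lab} /\
  (exists2 v, v \in S & lab v = 0) /\
  (forall u : 'I_n, exists2 v, v \in S & dominates lab v u).

Definition gamma_e_eq (n k : nat) : Prop :=
  (exists S lab, @ext_irr_dom n S lab /\ #|S| = k) /\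
  (forall S lab, @ext_irr_dom n S lab -> k <= #|S|).

(* Main.v *)
Require Import Defs.
From mathcomp Require Import all_boot.
From mathcomp Require Import zify.
Set Implicit Arguments. Unset Strict Implicit. Unset Printing Implicit Defensive.

Definition ok1 n l c := (l <= c) && (c + l < n).
Definition compat l c l' c' :=
  [&& c != c', c - l != c' - l', c - l != c' + l', c + l != c' - l' & c + l != c' + l'].
Fixpoint compat_all l c b cs :=
  if cs is c' :: cs' then compat l c b c' && compat_all l c b.+1 cs' else true.
Fixpoint valid n b cs :=
  if cs is c :: cs' then [&& ok1 n b c, compat_all b c b.+1 cs' & valid n b.+1 cs'] else true.
Fixpoint ends b (cs : seq nat) :=
  if cs is c :: cs' then (c - b) :: (c + b) :: ends b.+1 cs' else [::].
Definition good (cs : seq nat) x0 w p :=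
  [&& x0 \notin ends 1 cs, x0 \notin cs, w != x0, w \notin cs, p \notin ends 1 cs,
      p != x0 & size cs < maxn (p - w) (w - p)].
Definition final n cs :=
  all (fun x0 => all (fun w => all (fun p => ~~ good cs x0 w p) (iota 0 n)) (iota 0 n)) (iota 0 n).
Fixpoint search n k acc :=
  if k is k'.+1 then
    all (fun c => if valid n k (c :: acc) then search n k' (c :: acc) else true) (iota 0 n)
  else final n acc.


Lemma valid_cat n b xs ys : valid n b (xs ++ ys) -> valid n (b + size xs) ys.
Proof.
elim: xs b => [|x xs IH] b /=; first by rewrite addn0.
by case/and3P=> _ _ /IH; rewrite addSnnS.
Qed.

Lemma search_sound n k acc cs : size cs = k -> valid n 1 (cs ++ acc) ->
  search n k acc -> final n (cs ++ acc).
Proof.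
elim: k acc cs => [|k IH] acc cs.
  by move/eqP; rewrite size_eq0 => /eqP -> /=.
case/lastP: cs => [//|cs c]; rewrite size_rcons => -[Hs] Hv /= /allP Hall.
rewrite cat_rcons in Hv *.
have Hv2 := valid_cat Hv; rewrite /= Hs add1n in Hv2.
have Hc : c \in iota 0 n.
  move: Hv2 => /= /and3P [/andP [_ H] _ _]; rewrite mem_iota; lia.
move: (Hall c Hc); rewrite Hv2 => Hsr.
exact: IH Hs Hv Hsr.
Qed.

Lemma final_good n cs x0 w p : final n cs -> x0 < n -> w < n -> p < n -> ~~ good cs x0 w p.
Proof.
move=> /allP H hx hw hp.
have := H x0; rewrite mem_iota hx => /(_ isT) /allP /(_ w); rewrite mem_iota hw => /(_ isT).
by move=> /allP /(_ p); rewrite mem_iota hp => /(_ isT).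
Qed.

Lemma mem_ends b c k x : x \in ends b (map c (iota b k)) ->
  exists l, [/\ b <= l, l < b + k & (x = c l - l \/ x = c l + l)].
Proof.
elim: k b => [|k IH] b //=; rewrite !inE => /orP [/eqP ->|/orP [/eqP ->|]].
- by exists b; split=> //; [lia|left].
- by exists b; split=> //; [lia|right].
- by move/IH=> [l [h1 h2 h3]]; exists l; split=> //; lia.
Qed.

Lemma compat_all_map l x b k c : (forall l', b <= l' < b + k -> compat l x l' (c l')) ->
  compat_all l x b (map c (iota b k)).
Proof.
elim: k b => [|k IH] b H //=; apply/andP; split; first by apply: H; lia.
by apply: IH => l' hl; apply: H; lia.
Qed.

Lemma valid_map n b k c : (forall l, b <= l < b + k -> ok1 n l (c l)) ->
  (forall l l', b <= l -> l < l' -> l' < b + k -> compat l (c l) l' (c l')) ->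
  valid n b (map c (iota b k)).
Proof.
elim: k b => [|k IH] b H1 H2 //=; apply/and3P; split.
- by apply: H1; lia.
- by apply: compat_all_map => l' hl; apply: H2; lia.
- by apply: IH => [l hl|l l' h1 h2 h3]; [apply: H1|apply: H2]; lia.
Qed.

Lemma compat_all_notin l c b cs : compat_all l c b cs ->
  [/\ c - l \notin ends b cs, c + l \notin ends b cs & c \notin cs].
Proof.
elim: cs b => [|c' cs IH] b //= /andP [/and5P [h1 h2 h3 h4 h5] /IH [i1 i2 i3]].
rewrite !inE !negb_or i1 i2 i3 !andbT.
by rewrite h1 h2 h3 h4 h5.
Qed.

Lemma valid_uniq n b cs : valid n b cs -> uniq cs.
Proof.
elim: cs b => [|c cs IH] b //= /and3P [_ /compat_all_notin [_ _ ->] /IH] //.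
Qed.

Lemma valid_uniq_ends n b cs : 0 < b -> valid n b cs -> uniq (ends b cs).
Proof.
elim: cs b => [|c cs IH] b //= hb /and3P [/andP [h1 h2] /compat_all_notin [i1 i2 _] hv].
rewrite /= inE negb_or i1 i2 IH //; last by lia.
Qed.

Lemma valid_ends_lt n b cs x : valid n b cs -> x \in ends b cs -> x < n.
Proof.
elim: cs b => [|c cs IH] b //= /and3P [/andP [h1 h2] _ hv]; rewrite !inE.
case/orP => [/eqP ->|/orP [/eqP ->|]]; [lia|lia|exact: IH].
Qed.

Lemma valid_ok n b cs x : valid n b cs -> x \in cs -> x < n.
Proof.
elim: cs b => [|c cs IH] b //= /and3P [/andP [h1 h2] _ hv]; rewrite !inE.
case/orP => [/eqP ->|]; [lia|exact: IH hv].
Qed.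

Lemma size_ends b cs : size (ends b cs) = (size cs).*2.
Proof. by elim: cs b => [|c cs IH] b //=; rewrite IH doubleS. Qed.

Lemma sum_ends_A n b cs : valid n b cs ->
  \sum_(x <- ends b cs) (2*x+1)^2 = 2 * \sum_(x <- cs) (2*x+1)^2 + 8 * \sum_(i < size cs) (b+i)^2.
Proof.
elim: cs b => [|c cs IH] b /=; first by rewrite !big_nil big_ord0.
case/and3P=> /andP [h1 h2] _ hv.
rewrite !big_cons big_ord_recl IH //.
have -> : \sum_(i < size cs) (b + bump 0 i) ^ 2 = \sum_(i < size cs) (b.+1 + i) ^ 2.
  by apply: eq_bigr => i _; rewrite /bump /= add1n addSnnS.
rewrite addn0; set X := \sum_(_ <- _) _; set Y := \sum_(_ < _) _.
have E : (2 * (c - b) + 1) ^ 2 + (2 * (c + b) + 1) ^ 2 = 2 * (2 * c + 1) ^ 2 + 8 * b ^ 2.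
  have [t ->] : exists t, c = b + t by exists (c - b); lia.
  rewrite addKn. nia.
lia.
Qed.

Lemma sum_ends_B n b cs : valid n b cs ->
  \sum_(x <- ends b cs) (2*x+1) = 2 * \sum_(x <- cs) (2*x+1).
Proof.
elim: cs b => [|c cs IH] b /=; first by rewrite !big_nil.
case/and3P=> /andP [h1 h2] _ hv.
rewrite !big_cons IH //; lia.
Qed.

Lemma sum_uniq_ge (F : nat -> nat) (s : seq nat) : {homo F : x y / x <= y} -> uniq s ->
  \sum_(i < size s) F i <= \sum_(x <- s) F x.
Proof.
move=> hF; move Hk: (size s) => k; elim: k s Hk => [|k IH] s Hk hu.
  by rewrite big_ord0.
have [x xs kx] : exists2 x, x \in s & k <= x.
  apply/hasP; apply: contraT; rewrite -all_predC => /allP Hall.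
  have : {subset s <= iota 0 k}.
    by move=> y /Hall /=; rewrite mem_iota -ltnNge add0n.
  move/(uniq_leq_size hu); rewrite size_iota Hk; lia.
rewrite (perm_big _ (perm_to_rem xs)) big_cons big_ord_recr /= addnC.
apply: leq_add; first exact: hF.
apply: IH; last exact: rem_uniq.
by rewrite size_rem // Hk.
Qed.

Ltac pnia := rewrite ?expnS ?expn0 ?muln1; nia.

Lemma sumA k : 3 * \sum_(i < k) (2*i+1)^2 + k = 4 * k^3.
Proof. elim: k => [|k IH]; first by rewrite big_ord0. rewrite big_ord_recr /=.
move: IH; set S := \sum_(_ < _) _ => IH.
have -> : 3 * (S + (2*k+1)^2) + k.+1 = (3 * S + k) + (3*(2*k+1)^2 + 1) by rewrite mulnDr; lia.
rewrite IH. pnia. Qed.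
Lemma sumB k : \sum_(i < k) (2*i+1) = k^2.
Proof. elim: k => [|k IH]; first by rewrite big_ord0. rewrite big_ord_recr /= IH. pnia. Qed.
Lemma sumL h : 6 * \sum_(i < h) (1+i)^2 = h*(h+1)*(2*h+1).
Proof. elim: h => [|h IH]; first by rewrite big_ord0. rewrite big_ord_recr /=.
move: IH; set S := \sum_(_ < _) _ => IH.
rewrite mulnDr IH. pnia. Qed.

Lemma sum_iota (F : nat -> nat) n : \sum_(x <- iota 0 n) F x = \sum_(i < n) F i.
Proof. by rewrite -(big_mkord xpredT F) /index_iota subn0. Qed.

Definition Dm m x := if m <= x then 2*(x-m)+1 else 2*(m-1-x)+1.

Lemma Dm_id m x : (2*x+1)^2 + 4*m^2 = (Dm m x)^2 + 4*m*(2*x+1).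
Proof.
rewrite /Dm; case: leqP => h.
  have [t ->] : exists t, x = m + t by exists (x - m); lia.
  rewrite addKn; nia.
have [t ->] : exists t, m = x + t.+1 by exists (m - x).-1; lia.
have -> : x + t.+1 - 1 - x = t by lia.
nia.
Qed.

Lemma Dm_lower m cs : uniq cs -> exists k1 k2, k1 + k2 = size cs /\
  3 * (\sum_(i < k1) (2*i+1)^2) + 3 * (\sum_(i < k2) (2*i+1)^2) <= 3 * \sum_(x <- cs) (Dm m x)^2.
Proof.
move=> hu.
set s1 := [seq x - m | x <- cs & m <= x].
set s2 := [seq m - 1 - x | x <- cs & ~~ (m <= x)].
exists (size s1), (size s2); split.
  by rewrite !size_map !size_filter count_predC.
have hF : {homo (fun i => (2*i+1)^2) : x y / x <= y}.
  by move=> x y h; rewrite leq_exp2r // leq_add2r leq_mul2l h orbT.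
have u1 : uniq s1.
  rewrite map_inj_in_uniq ?filter_uniq // => x y; rewrite !mem_filter.
  move=> /andP [h1 _] /andP [h2 _]; lia.
have u2 : uniq s2.
  rewrite map_inj_in_uniq ?filter_uniq // => x y; rewrite !mem_filter.
  move=> /andP [h1 _] /andP [h2 _]; lia.
have := sum_uniq_ge hF u1; have := sum_uniq_ge hF u2.
rewrite !big_map !big_filter [X in _ <= 3 * X](bigID (fun x => m <= x)) /=.
have -> : \sum_(i <- cs | m <= i) Dm m i ^ 2 = \sum_(i <- cs | m <= i) (2 * (i - m) + 1) ^ 2.
  by apply: eq_bigr => i h; rewrite /Dm h.
have -> : \sum_(i <- cs | ~~ (m <= i)) Dm m i ^ 2 = \sum_(i <- cs | ~~ (m <= i)) (2 * (m - 1 - i) + 1) ^ 2.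
  by apply: eq_bigr => i h; rewrite /Dm (negbTE h).
move=> h2 h1; rewrite -mulnDr leq_mul2l; apply/orP; right; exact: leq_add h1 h2.
Qed.

Lemma cube_ineq a b : (a + b)^3 <= 4 * (a^3 + b^3).
Proof.
wlog h : a b / a <= b.
  move=> H; case: (leqP a b) => h; first exact: H.
  rewrite addnC (addnC (a^3)); apply: H; lia.
have [t ->] : exists t, b = a + t by exists (b - a); lia.
nia.
Qed.

Lemma arith0 h TA SA SB L SD G1 G2 k1 k2 Dx Dp Ax Ap Bx Bp :
  8 <= h ->
  3*TA + 2*(h+1) = 32*(h+1)*(h+1)*(h+1) ->
  Ax + (Ap + (2*SA + 8*L)) = TA ->
  Bx + (Bp + 2*SB) = 4*(h+1)*(h+1) ->
  SA + h*(4*(h+1)*(h+1)) = SD + 4*(h+1)*SB ->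
  6*L = h*(h+1)*(2*h+1) ->
  3*G1 + 3*G2 <= 3*SD ->
  3*G1 + k1 = 4*(k1*k1*k1) -> 3*G2 + k2 = 4*(k2*k2*k2) -> k1 + k2 = h ->
  (k1+k2)*(k1+k2)*(k1+k2) <= 4*(k1*k1*k1+k2*k2*k2) ->
  Ax + 4*(h+1)*(h+1) = Dx*Dx + 4*(h+1)*Bx -> 1 <= Dx ->
  Ap + 4*(h+1)*(h+1) = Dp*Dp + 4*(h+1)*Bp -> 1 <= Dp -> False.
Proof.
move=> hh h1 h2 h3 h4 h5 h6 h7 h8 h9 h10 h11 dx h12 dp.
have h3' : 4*(h+1)*Bx + 4*(h+1)*Bp + 8*(h+1)*SB = 16*(h+1)*(h+1)*(h+1).
  have := congr1 (muln (4*(h+1))) h3; rewrite !mulnDr; lia.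
have dx2 : 1 <= Dx*Dx by rewrite -(muln1 1) leq_mul.
have dp2 : 1 <= Dp*Dp by rewrite -(muln1 1) leq_mul.
have stepA : TA + 8*(h+1)*(h+1)*(h+1) = Dx*Dx + Dp*Dp + 2*SD + 8*L + 16*(h+1)*(h+1)*(h+1).
  lia.
have stepB : 6*SD + 6 <= 12*(h+1)*(h+1) - 6*(h+1).
  lia.
rewrite h9 in h10.
have stepC : 2*(h*h*h) <= 6*SD + 2*h.
  lia.
have F : 2*(h*h*h) + 6 <= 12*(h+1)*(h+1) - 6*(h+1) + 2*h by lia.
clear -F hh.
have [t ht] : exists t, h = 8 + t by exists (h - 8); lia.
subst h; nia.
Qed.

Lemma arith m h TA SA SB L SD G1 G2 k1 k2 Dx Dp Ax Ap Bx Bp :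
 9 <= m -> h = m.-1 ->
 3*TA + 2*m = 4*(2*m)^3 ->
 Ax + (Ap + (2*SA + 8*L)) = TA ->
 Bx + (Bp + 2*SB) = (2*m)^2 ->
 SA + 4*m^2 * h = SD + 4*m*SB ->
 6*L = h*(h+1)*(2*h+1) ->
 3*G1 + 3*G2 <= 3*SD ->
 3*G1 + k1 = 4*k1^3 -> 3*G2 + k2 = 4*k2^3 -> k1 + k2 = h ->
 (k1+k2)^3 <= 4*(k1^3+k2^3) ->
 Ax + 4*m^2 = Dx^2 + 4*m*Bx -> 1 <= Dx ->
 Ap + 4*m^2 = Dp^2 + 4*m*Bp -> 1 <= Dp -> False.
Proof.
move=> hm -> h1 h2 h3 h4 h5 h6 h7 h8 h9 h10 h11 dx h12 dp.
have [h0 ht] : exists h0, m = h0 + 1 by exists m.-1; lia.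
subst m; rewrite addn1 /= in h4 h5 h9.
move: h1 h3 h4 h7 h8 h10 h11 h12; rewrite !expnS !expn0 !muln1 => h1 h3 h4 h7 h8 h10 h11 h12.
apply: (arith0 (h := h0) (TA := TA) (SA := SA) (SB := SB) (L := L) (SD := SD) (G1 := G1) (G2 := G2)
  (k1 := k1) (k2 := k2) (Dx := Dx) (Dp := Dp) (Ax := Ax) (Ap := Ap) (Bx := Bx) (Bp := Bp)) => //.
- by move: hm; clear; lia.
- by move: h1; clear; lia.
- by move: h3; clear; lia.
- by move: h4; clear; lia.
- by move: h7; clear; lia.
- by move: h8; clear; lia.
- by move: h10; clear; lia.
- by move: h11; clear; lia.
- by move: h12; clear; lia.
Qed.

Lemma Dm_ge1 m x : 1 <= Dm m x.
Proof. by rewrite /Dm; case: ifP => _; rewrite addn1. Qed.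

Lemma moment_contra m cs x0 p : 9 <= m -> valid (2*m) 1 cs -> size cs = m.-1 ->
  x0 < 2*m -> p < 2*m -> x0 != p -> x0 \notin ends 1 cs -> p \notin ends 1 cs -> False.
Proof.
move=> hm hv hs hx hp hxp hxe hpe.
set pts := x0 :: p :: ends 1 cs.
have up : uniq pts by rewrite /= inE negb_or hxp hxe hpe (valid_uniq_ends _ hv).
have sub : {subset pts <= iota 0 (2*m)}.
  move=> y; rewrite !inE mem_iota add0n => /orP [/eqP ->//|/orP [/eqP ->//|]].
  exact: valid_ends_lt hv.
have sz : size (iota 0 (2*m)) <= size pts.
  by rewrite size_iota /= size_ends hs; lia.
have [_ eqm] := uniq_min_size up sub sz.
have pe : perm_eq pts (iota 0 (2*m)) := uniq_perm up (iota_uniq 0 (2*m)) eqm.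
have EA := perm_big _ pe (P := xpredT) (F := fun x => (2*x+1)^2) (op := addn) (x := 0).
have EB := perm_big _ pe (P := xpredT) (F := fun x => (2*x+1)) (op := addn) (x := 0).
rewrite !big_cons sum_iota in EA EB.
rewrite (sum_ends_A hv) in EA; rewrite (sum_ends_B hv) sum_iota sumB in EB.
have hA := sumA (2*m).
have hL := sumL (size cs).
have hD : \sum_(x <- cs) ((2*x+1)^2 + 4*m^2) = \sum_(x <- cs) ((Dm m x)^2 + 4*m*(2*x+1)).
  by apply: eq_bigr => x _; rewrite Dm_id.
have e1 : \sum_(x <- cs) 4*m^2 = 4*m^2 * size cs.
  by rewrite big_const_seq count_predT iter_addn_0.
have e2 : \sum_(x <- cs) 4*m*(2*x+1) = 4*m * \sum_(x <- cs) (2*x+1).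
  by rewrite big_distrr.
rewrite big_split [RHS]big_split /= e1 e2 in hD.
have [k1 [k2 [hk hG]]] := Dm_lower m (valid_uniq hv).
have g1 := sumA k1; have g2 := sumA k2.
have hc := cube_ineq k1 k2.
have ix := Dm_id m x0; have ip := Dm_id m p.
have dx := Dm_ge1 m x0; have dp := Dm_ge1 m p.
exact: (arith hm hs hA EA EB hD hL hG g1 g2 hk hc ix dx ip dp).
Qed.

Lemma ends_mem b c k l : b <= l < b + k ->
  (c l - l \in ends b (map c (iota b k))) && (c l + l \in ends b (map c (iota b k))).
Proof.
elim: k b => [|k IH] b hl; first lia.
rewrite /= !inE; case: (eqVneq l b) => [->|hne]; first by rewrite !eqxx /= orbT.
have := IH b.+1; rewrite (_ : b.+1 <= l < b.+1 + k); last lia.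
by move=> /(_ isT) /andP [-> ->]; rewrite !orbT.
Qed.

Lemma odd_contra h (c : nat -> nat) x0 : 1 <= h ->
  (forall l, 1 <= l <= h -> ok1 h.*2.+1 l (c l)) ->
  (forall l l', 1 <= l -> l < l' -> l' <= h -> compat l (c l) l' (c l')) ->
  x0 < h.*2.+1 ->
  (forall l, 1 <= l <= h -> (x0 != c l) && (x0 != c l - l) && (x0 != c l + l)) -> False.
Proof.
move=> hh hok hc hx hx0.
have hh' : 1 <= h <= h by rewrite hh leqnn.
have /andP [a1 a2] := hok h hh'.
have ch : c h = h by lia.
case: (ltnP 1 h) => h1.
  have hh2 : 1 <= h.-1 <= h by apply/andP; split; lia.
  have /andP [b1 b2] := hok h.-1 hh2.
  have q1 : 1 <= h.-1 by lia.
  have q2 : h.-1 < h by lia.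
  have := hc h.-1 h q1 q2 (leqnn h).
  case/and5P => /eqP d1 /eqP d2 _ _ /eqP d5.
  lia.
have e : h = 1 by lia.
move: (hx0 h hh'); rewrite ch => /andP [/andP [/eqP f1 /eqP f2] /eqP f3].
lia.
Qed.


Definition cov n (lab : 'I_n -> nat) (v : 'I_n) := [set u | dominates lab v u].

Lemma dom_iff n (lab : 'I_n -> nat) (v u : 'I_n) :
  dominates lab v u = (u + lab v == v :> nat) || (v + lab v == u :> nat).
Proof.
rewrite /dominates /path_dist; apply/eqP/orP => [H|[/eqP H|/eqP H]]; last 2 first.
- lia.
- lia.
case: (leqP u v) => h; [left|right]; apply/eqP; lia.
Qed.

Lemma in_cov n (lab : 'I_n -> nat) v u :
  (u \in cov lab v) = (u + lab v == v :> nat) || (v + lab v == u :> nat).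
Proof. by rewrite inE dom_iff. Qed.

Lemma cov_card n (lab : 'I_n -> nat) v : #|cov lab v| <= 2.
Proof.
rewrite cardE -(size_map (@nat_of_ord n)).
have -> : 2 = size [:: v - lab v; v + lab v] by [].
apply: uniq_leq_size; first by rewrite map_inj_uniq ?enum_uniq //; exact: val_inj.
move=> x /mapP [u]; rewrite mem_enum in_cov => /orP [/eqP h|/eqP h] ->; rewrite !inE.
  by apply/orP; left; apply/eqP; lia.
by apply/orP; right; apply/eqP; lia.
Qed.

Lemma cov_two n (lab : 'I_n -> nat) v : 2 <= #|cov lab v| ->
  [/\ 1 <= lab v, lab v <= v, v + lab v < n &
      forall u : 'I_n, ((u : nat) == v - lab v) || ((u : nat) == v + lab v) -> u \in cov lab v].
Proof.
move=> /card_gt1P [x [y [hx hy hxy]]].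
have hxy' : (x : nat) != y by [].
move: hx hy; rewrite !in_cov => hx hy.
have H1 : [/\ 1 <= lab v, lab v <= v & v + lab v < n].
  move: hx hy hxy' => /orP [/eqP hx|/eqP hx] /orP [/eqP hy|/eqP hy] /eqP hne.
  - lia.
  - have := ltn_ord y; split; lia.
  - have := ltn_ord x; split; lia.
  - lia.
case: H1 => h1 h2 h3; split=> // u /orP [/eqP hu|/eqP hu]; rewrite in_cov.
  by apply/orP; left; apply/eqP; lia.
by apply/orP; right; apply/eqP; lia.
Qed.

Lemma cov_self n (lab : 'I_n -> nat) v : lab v = 0 -> forall u, (u \in cov lab v) = (u == v).
Proof.
move=> h u; rewrite in_cov h !addn0; apply/idP/idP.
  by move=> /orP [/eqP h'|/eqP h']; apply/eqP/val_inj.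
by move/eqP ->; rewrite eqxx.
Qed.

Lemma card_sum (T : finType) (A : {set T}) : #|A| = \sum_u (u \in A : nat).
Proof. by rewrite -sum1_card big_mkcond /=; apply: eq_bigr => u _; case: (u \in A). Qed.

Definition Tset n (S : {set 'I_n}) (lab : 'I_n -> nat) := [set v in S | 1 < #|cov lab v|].

Lemma count_bound n (S : {set 'I_n}) lab :
  \sum_(v in S) #|cov lab v| <= #|S| + #|Tset S lab|.
Proof.
have -> : #|Tset S lab| = \sum_(v in S) (1 < #|cov lab v| : nat).
  rewrite /Tset card_sum [RHS]big_mkcond /=; apply: eq_bigr => u _; rewrite inE.
  by case: (u \in S).
rewrite -sum1_card -big_split /=; apply: leq_sum => v _.
have := cov_card lab v; case: ltnP => //= h _; lia.
Qed.

Lemma double_count n (S : {set 'I_n}) lab :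
  \sum_(v in S) #|cov lab v| = \sum_u #|[set v in S | u \in cov lab v]|.
Proof.
under eq_bigr => v _ do rewrite card_sum.
rewrite exchange_big /=; apply: eq_bigr => u _.
rewrite card_sum big_mkcond /=; apply: eq_bigr => v _; rewrite !inE.
by case: (v \in S).
Qed.


Lemma structure n h (S : {set 'I_n}) lab :
  (n = h.*2.+1 \/ n = h.*2.+2) -> ext_irr_dom S lab -> #|S| + h = n ->
  exists (c : nat -> nat) (x0 : nat),
   [/\ x0 < n,
    (forall l, 1 <= l <= h -> ok1 n l (c l)),
    (forall l l', 1 <= l -> l < l' -> l' <= h -> compat l (c l) l' (c l')),
    (forall l, 1 <= l <= h -> (x0 != c l) && (x0 != c l - l) && (x0 != c l + l)) &
    (n = h.*2.+2 -> exists w p, [/\ w < n, p < n, (w != x0) && (p != x0),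
        (forall l, 1 <= l <= h -> (w != c l) && (p != c l - l) && (p != c l + l)) &
        h < maxn (p - w) (w - p)])].
Proof.
move=> hn [Hinj [[x0 Sx0 lx0] Hcov]] hS.
set T := Tset S lab.
have TS : forall v, v \in T -> v \in S by move=> v; rewrite inE => /andP [].
have T2 : forall v, v \in T -> 1 < #|cov lab v| by move=> v; rewrite inE => /andP [].
have x0T : x0 \notin T.
  apply/negP => /T2; rewrite (eq_card (cov_self lx0)) card1 //.
have Tlab : forall v, v \in T -> 1 <= lab v <= h.
  move=> v /T2 /cov_two [h1 h2 h3 _]; have := ltn_ord v; lia.
set s := [seq lab v - 1 | v <- enum T].
have us : uniq s.
  rewrite map_inj_in_uniq ?enum_uniq // => x y; rewrite !mem_enum => hx hy e.
  apply: Hinj; [exact: TS|exact: TS|]; have := Tlab _ hx; have := Tlab _ hy; lia.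
have ss : {subset s <= iota 0 h}.
  move=> x /mapP [v]; rewrite mem_enum mem_iota => /Tlab hv ->; lia.
have sz : size s = #|T| by rewrite size_map cardE.
have Tle : #|T| <= h by rewrite -sz -(size_iota 0 h); exact: uniq_leq_size.
set N := fun u => #|[set v in S | u \in cov lab v]|.
have N1 : forall u, 0 < N u.
  move=> u; have [v Sv dv] := Hcov u; apply/card_gt0P; exists v; rewrite !inE Sv.
  by [].
have sumN : \sum_u N u <= n.
  rewrite /N -double_count; apply: leq_trans (count_bound S lab) _; rewrite -/T; lia.
have nle : n <= \sum_u N u.
  apply: (@leq_trans (\sum_(u : 'I_n) 1)); first by rewrite sum1_card card_ord.
  by apply: leq_sum => u _; exact: N1.
have Teq : #|T| = h.
  have := count_bound S lab; rewrite double_count -/T => hb.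
  have hb2 : \sum_u N u <= #|S| + #|T| := hb.
  lia.
have Nle1 : forall u, N u <= 1.
  move=> u0; rewrite leqNgt; apply/negP => h2.
  have : \sum_u N u >= 2 + n.-1.
    rewrite (bigD1 u0) //=; apply: leq_add => //.
    apply: (@leq_trans (\sum_(u | u != u0) 1)).
      by rewrite sum1dep_card cardsE cardC1 card_ord.
    by apply: leq_sum => u _; exact: N1.
  lia.
have uniqcov : forall u v1 v2, v1 \in S -> v2 \in S -> u \in cov lab v1 -> u \in cov lab v2 -> v1 = v2.
  move=> u v1 v2 S1 S2 c1 c2; have /card_le1_eqP H := Nle1 u.
  by apply: H; rewrite inE ?S1 ?S2.
have surj : forall l, 1 <= l <= h -> exists2 v, v \in T & lab v = l.
  move=> l hl.
  have [|_ eqs] := uniq_min_size us ss; first by rewrite size_iota sz Teq.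
  have : l - 1 \in s by rewrite eqs mem_iota; lia.
  move=> /mapP [v]; rewrite mem_enum => hv e; exists v => //.
  have := Tlab _ hv; lia.
pose c := fun l => if [pick v in T | lab v == l] is Some v then nat_of_ord v else 0.
have cP : forall l, 1 <= l <= h -> exists v, [/\ v \in T, lab v = l & c l = v].
  move=> l hl; rewrite /c; case: pickP => [v /andP [hv /eqP e]|H]; first by exists v.
  have [v hv e] := surj l hl; move: (H v); by rewrite hv e eqxx.
have key : forall l l' e, 1 <= l <= h -> 1 <= l' <= h -> e < n ->
    (e == c l - l) || (e == c l + l) -> (e == c l' - l') || (e == c l' + l') -> l = l'.
  move=> l l' e hl hl' he h1 h2.
  have [v [vT lv cv]] := cP l hl; have [v' [vT' lv' cv']] := cP l' hl'.
  have [_ _ _ Hv] := cov_two (T2 _ vT); have [_ _ _ Hv'] := cov_two (T2 _ vT').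
  have e1 : Ordinal he \in cov lab v by apply: Hv; rewrite /= lv -cv.
  have e2 : Ordinal he \in cov lab v' by apply: Hv'; rewrite /= lv' -cv'.
  have := uniqcov _ _ _ (TS _ vT) (TS _ vT') e1 e2; move=> ev; subst v'; lia.
have okc : forall l, 1 <= l <= h -> ok1 n l (c l).
  move=> l hl; have [v [vT lv cv]] := cP l hl; have [h1 h2 h3 _] := cov_two (T2 _ vT).
  rewrite /ok1 cv; apply/andP; split; lia.
exists c, x0; split.
- exact: ltn_ord.
- exact: okc.
- move=> l l' h1 h2 h3.
  have hl : 1 <= l <= h by lia.
  have hl' : 1 <= l' <= h by lia.
  have := okc l hl; have := okc l' hl'; rewrite /ok1 => /andP [o1 o2] /andP [o3 o4].
  apply/and5P; split; apply/eqP => e.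
  + have [v [vT lv cv]] := cP l hl; have [v' [vT' lv' cv']] := cP l' hl'.
    have ev : v = v' by apply: val_inj => /=; rewrite -cv -cv'.
    subst v'; lia.
  + have := key l l' (c l - l) hl hl'; rewrite eqxx e eqxx => /(_ _ isT isT); lia.
  + have := key l l' (c l - l) hl hl'; rewrite eqxx e eqxx orbT => /(_ _ isT isT); lia.
  + have := key l l' (c l + l) hl hl'; rewrite eqxx e eqxx orbT => /(_ _ isT isT); lia.
  + have := key l l' (c l + l) hl hl'; rewrite eqxx e eqxx !orbT => /(_ _ isT isT); lia.
- move=> l hl; have [v [vT lv cv]] := cP l hl; have [h1 h2 h3 Hv] := cov_two (T2 _ vT).
  have x0c : x0 \in cov lab x0 by rewrite (cov_self lx0).
  rewrite -andbA; apply/and3P; split; apply/eqP => e.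
  + have ev : x0 = v by apply: val_inj => /=; rewrite e cv.
    by move: x0T; rewrite ev vT.
  + have x0v : x0 \in cov lab v by apply: Hv; rewrite lv -cv e eqxx.
    have ev := uniqcov _ _ _ Sx0 (TS _ vT) x0c x0v.
    by move: x0T; rewrite ev vT.
  + have x0v : x0 \in cov lab v by apply: Hv; rewrite lv -cv e eqxx orbT.
    have ev := uniqcov _ _ _ Sx0 (TS _ vT) x0c x0v.
    by move: x0T; rewrite ev vT.
- move=> hn2.
  set cs := map c (iota 1 h).
  set pts := (x0 : nat) :: ends 1 cs.
  have : ~~ all (fun x => x \in pts) (iota 0 n).
    apply/negP => /allP H; have := uniq_leq_size (iota_uniq 0 n) H.
    rewrite size_iota /= size_ends size_map size_iota; lia.
  case/allPn => p; rewrite mem_iota add0n => /andP [_ pn].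
  rewrite /pts inE negb_or => /andP [px0 pe].
  have pnot : forall l, 1 <= l <= h -> (p != c l - l) && (p != c l + l).
    move=> l hl; have := ends_mem c (b := 1) (k := h) (l := l); rewrite add1n ltnS hl.
    move=> /(_ isT) /andP [e1 e2]; apply/andP; split; apply/eqP => e; move: pe.
      by rewrite e e1.
    by rewrite e e2.
  have [w Sw dw] := Hcov (Ordinal pn).
  have pw : Ordinal pn \in cov lab w by rewrite inE.
  have wx0 : w != x0.
    apply/eqP => e; move: pw; rewrite e (cov_self lx0) => /eqP /(congr1 val) /= e2.
    by move: px0; rewrite e2 eqxx.
  have wT : w \notin T.
    apply/negP => wT; have hl := Tlab _ wT.
    have [v [vT lv cv]] := cP _ hl.
    have ev : v = w by apply: Hinj => //; exact: TS.
    subst v; move: pw; rewrite in_cov /= => /orP [/eqP e|/eqP e].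
      by move: (pnot _ hl); rewrite cv -e addnK eqxx.
    by move: (pnot _ hl); rewrite cv e eqxx andbF.
  have lw : h < lab w.
    rewrite ltnNge; apply/negP => hw.
    have lw0 : lab w != 0 by apply/eqP => e; move: wx0; rewrite (Hinj _ _ Sw Sx0) ?e ?lx0 ?eqxx.
    have hl : 1 <= lab w <= h by rewrite hw andbT lt0n.
    have [v [vT lv cv]] := cP (lab w) hl.
    have ev : v = w by apply: Hinj => //; exact: TS.
    by move: wT; rewrite -ev vT.
  exists (nat_of_ord w), p; split.
  + exact: ltn_ord.
  + exact: pn.
  + rewrite px0 andbT; exact: wx0.
  + move=> l hl; rewrite -andbA pnot // andbT.
    apply/eqP => e; have [v [vT lv cv]] := cP _ hl.
    have ev : v = w by apply: val_inj => /=; rewrite -cv e.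
    by move: wT; rewrite -ev vT.
  + by move: dw; rewrite /dominates /path_dist /= => /eqP ->.
Qed.


Lemma lower n (S : {set 'I_n}) lab : ext_irr_dom S lab -> n.+2 %/ 2 <= #|S|.
Proof.
move=> [Hinj [[x0 Sx0 lx0] Hcov]].
set T := Tset S lab.
have TS : T \subset S :\ x0.
  apply/subsetP => v; rewrite !inE => /andP [Sv hv]; rewrite Sv andbT.
  apply/eqP => e; move: hv; rewrite e (eq_card (cov_self lx0)) card1.
  by [].
have cT : #|T| < #|S|.
  have := subset_leq_card TS; rewrite (cardsD1 x0 S) Sx0; lia.
have nle : n <= \sum_(v in S) #|cov lab v|.
  rewrite double_count.
  apply: (@leq_trans (\sum_(u : 'I_n) 1)); first by rewrite sum1_card card_ord.
  apply: leq_sum => u _; have [v Sv dv] := Hcov u; apply/card_gt0P; exists v.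
  by rewrite !inE Sv.
have := count_bound S lab; rewrite -/T => hb.
lia.
Qed.

Lemma pos n (P : pred nat) (lb : nat -> nat) :
  all (fun x => all (fun y => ~~ P x || ~~ P y || (lb x != lb y) || (x == y)) (iota 0 n)) (iota 0 n) ->
  has (fun x => P x && (lb x == 0)) (iota 0 n) ->
  all (fun u => has (fun v => P v && (maxn (u - v) (v - u) == lb v)) (iota 0 n)) (iota 0 n) ->
  count P (iota 0 n) = n.+2 %/ 2 -> gamma_e_eq n (n.+2 %/ 2).
Proof.
move=> /allP Hi /hasP [x0 hx0 /andP [Px0 /eqP l0]] /allP Hc hS.
set S := [set x : 'I_n | P x].
set lab := fun x : 'I_n => lb x.
have mi : forall x : 'I_n, nat_of_ord x \in iota 0 n by move=> x; rewrite mem_iota /=.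
have H : ext_irr_dom S lab.
  split; last split.
  - move=> x y; rewrite !inE => Sx Sy e; have /allP := Hi x (mi x).
    move=> /(_ y (mi y)); rewrite Sx Sy; move: e; rewrite /lab => ->; rewrite eqxx /= => /eqP; exact: val_inj.
  - have hx : x0 < n by move: hx0; rewrite mem_iota.
    by exists (Ordinal hx); rewrite ?inE.
  - move=> u; have /hasP [v hv /andP [Sv dv]] := Hc u (mi u).
    have hv' : v < n by move: hv; rewrite mem_iota.
    by exists (Ordinal hv'); rewrite ?inE.
split; last by move=> S' lab' H'; exact: lower H'.
exists S, lab; split=> //.
by rewrite cardsE cardE -(size_map val) -filter_map /= -enumT val_enum_ord size_filter.
Qed.

Lemma pos1 : gamma_e_eq 1 (3 %/ 2).
Proof. by apply: (@pos 1 predT (fun _ => 0)); vm_compute. Qed.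

Lemma pos6 : gamma_e_eq 6 (8 %/ 2).
Proof.
by apply: (@pos 6 (fun i => i \in [:: 0; 1; 3; 4]) (fun i => nth 0 [:: 3; 1; 0; 2; 0; 0] i)); vm_compute.
Qed.

Lemma pos10 : gamma_e_eq 10 (12 %/ 2).
Proof.
by apply: (@pos 10 (fun i => i \in [:: 0; 2; 3; 4; 5; 6])
  (fun i => nth 0 [:: 7; 0; 0; 3; 1; 4; 2; 0; 0; 0] i)); vm_compute.
Qed.

Lemma small_search k : k < 8 -> k = 2 \/ k = 4 \/ search (k.*2.+2) k [::].
Proof.
case: k => [|[|[|[|[|[|[|[|k]]]]]]]] hk; try lia; right; try (by left); right; by vm_compute.
Qed.

Unset Implicit Arguments.

Theorem theorem5p7 (n : nat) : 1 <= n ->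
  (gamma_e_eq n (n.+2 %/ 2) <-> n \in [:: 1; 6; 10]).
Proof.
move=> n1; split; last first.
  by rewrite !inE => /or3P [/eqP ->|/eqP ->|/eqP ->]; [exact: pos1|exact: pos6|exact: pos10].
move=> [[S [lab [H hS]]] _].
have [h hn] : exists h, n = h.*2.+1 \/ n = h.*2.+2.
  exists (n.-1)./2; have := odd_double_half n.-1; case: (odd n.-1) => /= e; lia.
have hS' : #|S| + h = n by lia.
have [c [x0 [hx hok hcp hx0 hev]]] := structure hn H hS'.
case: hn => hn.
  case: (posnP h) => [h0|hpos]; first by rewrite hn h0.
  by exfalso; subst n; exact: odd_contra hpos hok hcp hx hx0.
have [w [p [hw hp hwp hwl hd]]] := hev hn.
set cs := map c (iota 1 h).
have hv : valid n 1 cs.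
  by apply: valid_map => [l hl|l l' h1 h2 h3]; [apply: hok|apply: hcp]; lia.
have x0e : x0 \notin ends 1 cs.
  apply/negP => /mem_ends [l [l1 l2 le]].
  have hl : 1 <= l <= h by lia.
  move: (hx0 l hl); case: le => ->; rewrite eqxx ?andbF //.
have pe : p \notin ends 1 cs.
  apply/negP => /mem_ends [l [l1 l2 le]].
  have hl : 1 <= l <= h by lia.
  move: (hwl l hl); case: le => ->; rewrite eqxx ?andbF //.
have x0c : x0 \notin cs.
  apply/negP => /mapP [l]; rewrite mem_iota => hl e.
  have hl' : 1 <= l <= h by lia.
  by move: (hx0 l hl'); rewrite e eqxx.
have wc : w \notin cs.
  apply/negP => /mapP [l]; rewrite mem_iota => hl e.
  have hl' : 1 <= l <= h by lia.
  by move: (hwl l hl'); rewrite e eqxx.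
move: hwp => /andP [wx0 px0].
case: (leqP 8 h) => hh.
  have e2 : 2 * h.+1 = n by lia.
  exfalso; apply: (moment_contra (m := h.+1) (cs := cs) (x0 := x0) (p := p)) => //.
  - by rewrite e2.
  - by rewrite size_map size_iota.
  - by rewrite e2.
  - by rewrite e2.
  - by rewrite eq_sym.
have gd : good cs x0 w p.
  by rewrite /good x0e x0c wx0 wc pe px0 size_map size_iota hd.
have [e|[e|hs]] := small_search hh; first by rewrite hn e.
  by rewrite hn e.
rewrite -hn in hs.
have hsz : size cs = h by rewrite size_map size_iota.
have hv' : valid n 1 (cs ++ [::]) by rewrite cats0.
have := search_sound hsz hv' hs; rewrite cats0 => fin.
by have := final_good fin hx hw hp; rewrite gd.
Qed.
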